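(* Let $n\ge 1$, $U>0$, and let $a_1,\dots,a_n,b\in\mathbb{R}$ satisfy $a_1\neq 0$, $b\neq 0$ and $\sum_{i=1}^n a_i\neq 1$. Consider the latent linear dynamic system $$\boldsymbol{z}^{t+1}=\boldsymbol{A}\boldsymbol{z}^t+\boldsymbol{B}u^t,\qquad \boldsymbol{x}^t=g(\boldsymbol{z}^t),$$ where $\boldsymbol{z}^t\in\mathbb{R}^n$, $u^t\in(-U,U)$, $\boldsymbol{A}\in\mathbb{R}^{n\times n}$ is the companion matrix whose first $n-1$ rows are $\boldsymbol{e}_2^T,\dots,\boldsymbol{e}_n^T$ (the $(i,i+1)$ entries equal $1$, all other entries of these rows $0$) and whose last row is $(a_1,a_2,\dots,a_n)$, $\boldsymbol{B}=(0,\dots,0,b)^T\in\mathbb{R}^n$, and $g:\mathbb{R}^n\to\mathcal{X}\subset\mathbb{R}^m$ ($m\ge n$) is an unknown injective differentiable function. Fix an arbitrary nonzero constant $\hat b$ and set $\boldsymbol{\hat B}=(0,\dots,0,\hat b)^T$. Let a differentiable encoder $f:\mathcal{X}\to\mathbb{R}^n$ and a matrix $\boldsymbol{\hat A}$, of the same companion form as $\boldsymbol{A}$ but with an arbitrary last row $(\hat a_1,\dots,\hat a_n)$, be a solution of $$\min_{\boldsymbol{\hat A},\,f}\ \mathbb{E}\big[\|f(\boldsymbol{x}^{t+1})-\boldsymbol{\hat A}f(\boldsymbol{x}^t)-\boldsymbol{\hat B}u^t\|^2\big],$$ where $\boldsymbol{x}^{t+1}=g(\boldsymbol{A}\boldsymbol{z}^t+\boldsymbol{B}u^t)$,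 $\boldsymbol{x}^t=g(\boldsymbol{z}^t)$, and the expectation is taken over all states $\boldsymbol{z}^t\in\mathbb{R}^n$ and all admissible inputs $u^t\in(-U,U)$ (with unknown distributions). Define $\tau=f\circ g:\mathbb{R}^n\to\mathbb{R}^n$. Then $\tau(\boldsymbol{z})=\frac{\hat b}{b}\,\boldsymbol{z}$ for all $\boldsymbol{z}\in\mathbb{R}^n$, and $\boldsymbol{\hat A}=\boldsymbol{A}$.
   Context: This is a single-input linear system $q^{t+n}-a_nq^{t+n-1}-\cdots-a_1q^t=bu^t$ written in controllable canonical form with state $\boldsymbol{z}^t=(q^t,\dots,q^{t+n-1})^T$. The order $n$ is known. The input $u^t$ can be set to any value in $(-U,U)$ at any state. *)

(* Defs.v *)
From HB Require Import structures.
From mathcomp Require Import all_boot all_order all_algebra.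
From mathcomp Require Import all_classical all_reals all_analysis.
Set Implicit Arguments. Unset Strict Implicit. Unset Printing Implicit Defensive.
Import Order.TTheory GRing.Theory Num.Theory.
Import numFieldNormedType.Exports.
Local Open Scope ring_scope.

Definition companion (R : ringType) (n : nat) (a : 'I_n -> R) : 'M[R]_n :=
  \matrix_(i < n, j < n)
    if (i.+1 < n)%N then ((val j == i.+1)%N)%:R else a j.

Definition last_vec (R : ringType) (n : nat) (b : R) : 'cV[R]_n :=
  \col_(i < n) (if (i.+1 == n)%N then b else 0).

(* Main.v *)
Require Import Defs.
From HB Require Import structures.
From mathcomp Require Import all_boot all_order all_algebra.
From mathcomp Require Import all_classical all_reals all_analysis.
From mathcomp Require Import zify ring lra.
Import Order.TTheory GRing.Theory Num.Theory.
Import numFieldNormedType.Exports.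
Local Open Scope ring_scope.

Lemma compmxE (R : ringType) n (a : 'I_n.+1 -> R) (z : 'cV[R]_n.+1) (i : 'I_n.+1) :
  (companion a *m z) i 0 =
  if (i < n)%N then z (inord i.+1) 0 else \sum_j a j * z j 0.
Proof.
rewrite mxE; under eq_bigr => j _ do rewrite mxE.
rewrite ltnS; case: ifP => Hi.
  rewrite (bigD1 (inord i.+1)) //= inordK ?ltnS // eqxx mul1r big1 ?addr0 //.
  move=> j Hj; suff -> : (val j == i.+1) = false by rewrite mul0r.
  apply/negbTE; apply: contra Hj => /eqP E; apply/eqP/val_inj.
  by rewrite /= inordK ?ltnS // E.
by [].
Qed.

Lemma compE_col (R : ringType) n (a : 'I_n.+1 -> R) (j : 'I_n.+1) :
  companion a *m (delta_mx j 0 : 'cV[R]_n.+1) =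
  (if (0 < j)%N then (delta_mx (inord j.-1) 0 : 'cV[R]_n.+1) else 0)
   + a j *: (delta_mx ord_max 0 : 'cV[R]_n.+1).
Proof.
rewrite -colE; apply/matrixP => i k; rewrite (ord1 k) !mxE ltnS !eqxx !andbT.
case: (ltnP i n) => Hi.
  have -> : (i == ord_max) = false.
    by apply/negbTE; apply/eqP => E; rewrite E /= ltnn in Hi.
  rewrite mulr0 addr0 -[val j]/(nat_of_ord j).
  case: (posnP j) => Hj.
    by rewrite Hj mxE.
  rewrite !mxE eqxx andbT; congr (_%:R).
  have Hj' : (j.-1 < n.+1)%N by rewrite (leq_ltn_trans (leq_pred _)).
  case: eqP => E; case: eqP => F //.
    by exfalso; apply: F; apply: val_inj; rewrite /= inordK // E.
  exfalso; apply: E. rewrite F /=. rewrite inordK //. rewrite prednK //.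
have Ei : i = ord_max by apply/val_inj/eqP; rewrite eqn_leq -ltnS ltn_ord /= Hi.
rewrite Ei eqxx mulr1.
case: (posnP j) => Hj; first by rewrite mxE add0r.
rewrite !mxE eqxx andbT.
suff -> : (ord_max == inord j.-1 :> 'I_n.+1) = false by rewrite add0r.
apply/negbTE/eqP => E; have := congr1 val E; rewrite /= inordK.
  by move=> En; have := ltn_ord j; rewrite -(prednK Hj) -En ltnn.
by rewrite (leq_ltn_trans (leq_pred _)).
Qed.

Lemma lastvecE (R : ringType) n (x : R) :
  last_vec n.+1 x = x *: (delta_mx ord_max 0 : 'cV[R]_n.+1).
Proof.
apply/matrixP => i k; rewrite (ord1 k) !mxE andbT eqSS.
have -> : (i == ord_max) = (val i == n) by [].
by case: eqP; rewrite ?mulr1 ?mulr0.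
Qed.

Lemma comp_surj (R : fieldType) n (a : 'I_n.+1 -> R) : a ord0 != 0 ->
  forall y : 'cV[R]_n.+1, exists z, companion a *m z = y.
Proof.
move=> a0 y.
pose x0 := (y ord_max 0 - \sum_(j < n) a (lift ord0 j) * y (inord j) 0) / a ord0.
exists (\col_(i < n.+1) (if (nat_of_ord i == 0)%N then x0 else y (inord i.-1) 0)).
apply/matrixP => i k; rewrite (ord1 k) compmxE; case: ifP => Hi.
  by rewrite mxE inordK ?ltnS //= inord_val.
rewrite big_ord_recl !mxE /=.
under eq_bigr => j _ do rewrite mxE /=.
rewrite /x0 mulrC divfK // subrK.
have Ei : i = ord_max by apply/val_inj/eqP; rewrite eqn_leq -ltnS ltn_ord /= leqNgt Hi.
by rewrite Ei.
Qed.
Arguments comp_surj {R n a}.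

Lemma subZE (R : ringType) m n (M N : 'M[R]_(m, n)) (c : R) i j :
  (M - c *: N) i j = M i j - c * N i j.
Proof. by rewrite !mxE. Qed.

Lemma core (R : realType) n (U b bh : R) (a ah : 'I_n.+1 -> R)
  (tau : 'cV[R]_n.+1 -> 'cV[R]_n.+1) :
  0 < U -> a ord0 != 0 -> b != 0 -> \sum_(i < n.+1) a i != 1 -> bh != 0 ->
  (forall z u, -U < u < U ->
     tau (companion a *m z + u *: last_vec n.+1 b)
     = companion ah *m tau z + u *: last_vec n.+1 bh) ->
  (forall z, tau z = (bh / b) *: z) /\ companion ah = companion a.
Proof.
move=> U0 a0 b0 sa bh0 Hz.
pose c := bh / b.
pose en : 'cV[R]_n.+1 := delta_mx ord_max 0.
have c0 : c != 0 by rewrite mulf_neq0 ?invr_eq0.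
have H0 : forall z, tau (companion a *m z) = companion ah *m tau z.
  move=> z; have := Hz z 0; rewrite !scale0r !addr0; apply.
  by rewrite oppr_lt0 U0.
have T2 : forall w u, -U < u < U ->
    tau (w + u *: last_vec n.+1 b) = tau w + u *: last_vec n.+1 bh.
  by move=> w u Hu; have [z <-] := comp_surj a0 w; rewrite Hz // H0.
have T3k : forall k w s, `|s| < (k%:R + 1) * U ->
    tau (w + s *: last_vec n.+1 b) = tau w + s *: last_vec n.+1 bh.
  elim=> [|k IH] w s Hs.
    by apply: T2; rewrite -ltr_norml; rewrite add0r mul1r in Hs.
  have K0 : 0 <= k%:R :> R by exact: ler0n.
  pose N : R := k%:R + 2.
  have N0 : 0 < N by rewrite /N; lra.
  pose t := s / N.
  have -> : s = (s - t) + t by rewrite subrK.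
  rewrite scalerDl addrA T2; last first.
    rewrite -ltr_norml /t normrM normfV (gtr0_norm N0) ltr_pdivrMr //.
    by rewrite -natr1 in Hs; rewrite /N; lra.
  rewrite IH; first by rewrite -addrA -scalerDl subrK.
  have -> : s - t = s * ((k%:R + 1) / N) by rewrite /t /N; field; lra.
  rewrite normrM (ger0_norm (x := (k%:R + 1) / N)); last first.
    by apply: divr_ge0; [lra | exact: ltW].
  rewrite mulrA ltr_pdivrMr // -natr1 in Hs *.
  rewrite /N; nra.
have T3 : forall w s,
    tau (w + s *: last_vec n.+1 b) = tau w + s *: last_vec n.+1 bh.
  move=> w s.
  have := archi_boundP (divr_ge0 (normr_ge0 s) (ltW U0)).
  set k := Num.Def.archi_bound _ => Hk.
  apply: (T3k k); rewrite ltr_pdivrMr // in Hk.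
  have K0 : 0 <= k%:R :> R by exact: ler0n.
  nra.
pose h z := tau z - c *: z.
have Hinv : forall w s, h (w + s *: en) = h w.
  move=> w s; rewrite /h.
  have -> : s *: en = (s / b) *: last_vec n.+1 b.
    by rewrite lastvecE scalerA divfK.
  rewrite T3 !lastvecE; apply/matrixP => i j; rewrite !mxE /c.
  by field.
have Hsh : forall z (i : 'I_n.+1), (i < n)%N ->
    h (companion a *m z) i 0 = h z (inord i.+1) 0.
  move=> z i Hi; rewrite /h !subZE H0.
  by rewrite compmxE Hi compmxE Hi.
have Inv : forall k, (k <= n)%N -> forall j : 'I_n.+1, (j < k)%N ->
    forall z s, h (z + s *: delta_mx j 0) (inord k) 0 = h z (inord k) 0.
  elim=> [|k IH] Hk j //= Hj z s.
  have E : forall z, h z (inord k.+1) 0 = h (companion a *m z) (inord k) 0.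
    by move=> z'; rewrite Hsh ?inordK //; lia.
  rewrite !E mulmxDr -scalemxAr compE_col.
  case: (posnP j) => Hj0.
    by rewrite add0r scalerA Hinv.
  rewrite scalerDr scalerA addrA Hinv IH //; first lia.
  rewrite inordK; lia.
have Inv' : forall (j : 'I_n.+1) z s,
    h (z + s *: delta_mx j 0) ord_max 0 = h z ord_max 0.
  move=> j z s; case: (ltnP j n) => Hj.
    have := Inv n (leqnn n) j Hj z s.
    by rewrite (_ : inord n = ord_max) //; apply/val_inj; rewrite /= inordK.
  have -> : j = ord_max by apply/val_inj/eqP; rewrite eqn_leq -ltnS ltn_ord.
  by rewrite Hinv.
have Cn : forall z, h z ord_max 0 = h 0 ord_max 0.
  suff P : forall k, (k <= n.+1)%N -> forall z : 'cV[R]_n.+1,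
      (forall j : 'I_n.+1, (k <= j)%N -> z j 0 = 0) ->
      h z ord_max 0 = h 0 ord_max 0.
    by move=> z; apply: (P n.+1) => // j; rewrite leqNgt ltn_ord.
  elim=> [|k IH] Hk z Hz0.
    have -> : z = 0 by apply/matrixP => i j; rewrite (ord1 j) Hz0 // mxE.
    by [].
  pose j0 : 'I_n.+1 := inord k.
  have -> : z = (z - z j0 0 *: delta_mx j0 0) + z j0 0 *: delta_mx j0 0.
    by rewrite subrK.
  rewrite Inv' IH //; first exact: ltnW.
  move=> j Hj; rewrite !mxE eqxx andbT.
  case: (j =P j0) => [->|Hne]; first by rewrite mulr1 subrr.
  rewrite mulr0 subr0 Hz0 // ltn_neqAle Hj andbT.
  apply/eqP => E; apply: Hne; apply/val_inj; rewrite /= inordK //; lia.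
have Call : forall d, (d <= n)%N -> forall y,
    h y (inord (n - d)) 0 = h 0 (inord (n - d)) 0.
  elim=> [|d IH] Hd y.
    by rewrite subn0 (_ : inord n = ord_max) ?Cn //; apply/val_inj; rewrite /= inordK.
  have [z <-] := comp_surj a0 y.
  transitivity (h (companion a *m 0) (inord (n - d.+1)) 0); last by rewrite mulmx0.
  rewrite !Hsh ?inordK; try lia.
  have -> : ((n - d.+1).+1 = n - d)%N by lia.
  by rewrite IH //; lia.
have Hc : forall z, h z = h 0.
  move=> z; apply/matrixP => i j; rewrite (ord1 j).
  have := Call (n - i)%N (leq_subr _ _) z.
  by rewrite subKn ?inord_val // -ltnS.
set K := h 0.
have Etau : forall z, tau z = K + c *: z.
  by move=> z; rewrite /K -(Hc z) /h subrK.
have HAK : forall z, K + c *: (companion a *m z)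
    = companion ah *m K + c *: (companion ah *m z).
  by move=> z; rewrite -Etau H0 Etau mulmxDr scalemxAr.
have KAh : K = companion ah *m K.
  by have := HAK 0; rewrite !mulmx0 !scaler0 !addr0.
have AAh : companion ah = companion a.
  have Hz' : forall z : 'cV[R]_n.+1, companion a *m z = companion ah *m z.
    move=> z; have := HAK z; rewrite -KAh => /addrI /(congr1 (fun v => c^-1 *: v)).
    by rewrite !scalerA mulVf // !scale1r.
  apply/matrixP => i j.
  have := congr1 (fun M : 'cV[R]_n.+1 => M i 0) (Hz' (delta_mx j 0)).
  by rewrite -!colE !mxE.
rewrite AAh in KAh.
have Kc : forall k, (k <= n)%N -> K (inord k) 0 = K ord0 0.
  elim=> [|k IH] Hk.
    by rewrite (_ : inord 0 = ord0) //; apply/val_inj; rewrite /= inordK.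
  rewrite -IH; last lia.
  have Hkn : (k < n)%N by lia.
  by rewrite [in RHS]KAh compmxE inordK ?Hkn // ltnS ltnW.
have KK : forall j : 'I_n.+1, K j 0 = K ord0 0.
  by move=> j; rewrite -(inord_val j) Kc // -ltnS.
have K0 : K ord0 0 = 0.
  have := congr1 (fun M : 'cV[R]_n.+1 => M ord_max 0) KAh; rewrite /= compmxE ltnn.
  rewrite (eq_bigr (fun j => a j * K ord0 0)); last by move=> j _; rewrite KK.
  rewrite -mulr_suml KK => /eqP.
  rewrite -subr_eq0 -{1}(mul1r (K ord0 0)) -mulrBl mulf_eq0 subr_eq0 eq_sym.
  by rewrite (negbTE sa) /= => /eqP.
have K00 : K = 0 by apply/matrixP => i j; rewrite (ord1 j) KK K0 mxE.
split => // z.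
by rewrite Etau K00 add0r.
Qed.

Theorem theorem1 (R : realType) (n m : nat) (U b bh : R) (a ah : 'I_n -> R)
    (g : 'cV[R]_n -> 'cV[R]_m) (f : 'cV[R]_m -> 'cV[R]_n) :
  (0 < n)%N -> (n <= m)%N -> 0 < U ->
  (forall i : 'I_n, val i = 0%N -> a i != 0) ->
  b != 0 -> \sum_(i < n) a i != 1 -> bh != 0 ->
  injective g -> (forall z, differentiable g z) ->
  (forall z, differentiable f (g z)) ->
  (* zero-loss condition (the minimum of the objective is 0) *)
  (forall (z : 'cV[R]_n) (u : R), -U < u < U ->
     f (g (companion a *m z + u *: last_vec n b))
     = companion ah *m f (g z) + u *: last_vec n bh) ->
  (forall z : 'cV[R]_n, f (g z) = (bh / b) *: z) /\ companion ah = companion a.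
Proof.
case: n a ah g f => [//|n] a ah g f _ _ U0 Ha b0 sa bh0 _ _ _ Hz.
exact: (@core R n U b bh a ah (fun z => f (g z)) U0 (Ha ord0 erefl) b0 sa bh0 Hz).
Qed.
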